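(* (1) Every ideal of $C(X)_\mathcal{P}$ has depth zero if and only if $(X,\tau,\mathcal{P})$ is a $\mathcal{P}P$-space. (2) Every essential ideal of $C(X)_\mathcal{P}$ has depth zero if and only if $(X,\tau,\mathcal{P})$ is an almost $\mathcal{P}P$-space.
   Context: Let $(X,\tau)$ be a $T_1$ topological space and $\mathcal{P}$ an ideal of closed subsets of $X$ (a nonempty family of closed sets closed under finite unions and under taking closed subsets). For $f\colon X\to\mathbb{R}$, $D_f$ denotes the set of points of discontinuity of $f$, and $C(X)_\mathcal{P}=\{f\colon X\to\mathbb{R} : \overline{D_f}\in\mathcal{P}\}$, a commutative ring with unity under pointwise operations. For $f\in C(X)_\mathcal{P}$, $Z_\mathcal{P}(f)=\{x: f(x)=0\}$, $coz(f)=X\setminus Z_\mathcal{P}(f)$; $X_\mathcal{P}$ is $X$ with the topology having base $\{coz(f)\}$ and $int_{X_\mathcal{P}}$ its interior. $(X,\tau,\mathcal{P})$ is a $\mathcal{P}P$-space if $C(X)_\mathcal{P}$ is von Neumann regular, and an almost $\mathcal{P}P$-space if $Z_\mathcal{P}(f)\ne\emptyset$ implies $int_{X_\mathcal{P}}Z_\mathcal{P}(f)\neq\emptyset$ for $f\in C(X)_\mathcal{P}$. For an ideal $I$ regarded as a $C(X)_\mathcal{P}$-module $M$, an element $a$ is $M$-regular if $am\neq 0$ for all $m\in M\setminus\{0\}$; a sequence $a_1,\dots,a_n$ is $I$-regular if $a_1$ is $I$-regular, each $a_k$ is $I/(a_1I+\dots+a_{k-1}I)$-regular, and $a_1I+\dots+a_nI\neq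 I$; the depth of $I$ is the length of a maximal $I$-regular sequence. An ideal is essential if it intersects every nonzero ideal nontrivially. *)

(* Defs.v *)
From HB Require Import structures.
From mathcomp Require Import all_boot all_order all_algebra.
From mathcomp Require Import all_classical all_reals all_analysis.
Set Implicit Arguments. Unset Strict Implicit. Unset Printing Implicit Defensive.
Import Order.TTheory GRing.Theory Num.Theory numFieldNormedType.Exports.
Local Open Scope classical_set_scope.
Local Open Scope ring_scope.

Section CXP.
Variables (X : topologicalType) (R : realType).

Definition closed_ideal (P : set (set X)) : Prop :=
  [/\ P !=set0,
      (forall A, P A -> closed A),
      (forall A B, P A -> P B -> P (A `|` B)) &
      (forall A B, P A -> closed B -> B `<=` A -> P B)].

Definition discont (f : X -> R) : set X := [set x : X | ~ {for x, continuous f}].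

Definition CP (P : set (set X)) : set (X -> R) :=
  [set f | P (closure (discont f))].

Definition zeroset (f : X -> R) : set X := [set x | f x = 0].
Definition coz (f : X -> R) : set X := [set x | f x != 0].

(* interior in X_P, the topology on X with base { coz f | f in C(X)_P } *)
Definition int_XP (P : set (set X)) (A : set X) : set X :=
  [set x | exists g, CP P g /\ coz g x /\ coz g `<=` A].

(* C(X)_P is von Neumann regular *)
Definition PP_space (P : set (set X)) : Prop :=
  forall f, CP P f -> exists2 g, CP P g & f = (fun x => f x * g x * f x).

Definition almost_PP_space (P : set (set X)) : Prop :=
  forall f, CP P f -> zeroset f !=set0 -> int_XP P (zeroset f) !=set0.

Definition is_ideal (P : set (set X)) (I : set (X -> R)) : Prop :=
  [/\ I `<=` CP P,
      I (fun _ => 0),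
      (forall f g, I f -> I g -> I (fun x => f x + g x)) &
      (forall a f, CP P a -> I f -> I (fun x => a x * f x))].

Definition nonzero_set (I : set (X -> R)) : Prop :=
  exists2 f, I f & f <> (fun _ => 0).

Definition essential_ideal (P : set (set X)) (I : set (X -> R)) : Prop :=
  is_ideal P I /\
  forall J, is_ideal P J -> nonzero_set J -> nonzero_set (I `&` J).

Definition sum_mul_ideal (I : set (X -> R)) (a : nat -> X -> R) (k : nat)
  : set (X -> R) :=
  [set h | exists2 m : nat -> X -> R, (forall j, (j < k)%N -> I (m j)) &
           h = (fun x => \sum_(j < k) a j x * m j x)].

(* b is (M/N)-regular, M = I, N a submodule of I *)
Definition quot_regular (I N : set (X -> R)) (b : X -> R) : Prop :=
  forall m, I m -> ~ N m -> ~ N (fun x => b x * m x).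

Definition regular_seq (P : set (set X)) (I : set (X -> R))
  (a : nat -> X -> R) (n : nat) : Prop :=
  [/\ (forall k, (k < n)%N -> CP P (a k)),
      (forall k, (k < n)%N -> quot_regular I (sum_mul_ideal I a k) (a k)) &
      sum_mul_ideal I a n <> I].

Definition depth_zero (P : set (set X)) (I : set (X -> R)) : Prop :=
  ~ exists a n, (0 < n)%N /\ regular_seq P I a n.

End CXP.

(* Main.v *)
Require Import Defs.
From mathcomp Require Import all_boot all_order all_algebra.
From mathcomp Require Import all_classical all_reals all_analysis.
From mathcomp Require Import ring.
Import Order.TTheory GRing.Theory Num.Theory numFieldNormedType.Exports.
Local Open Scope classical_set_scope.
Local Open Scope ring_scope.
Set Implicit Arguments.
Section H.
Variables (X : topologicalType) (R : realType) (P : set (set X)).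
Hypothesis hP : closed_ideal P.
Lemma CP_of (h f g : X -> R) : CP P f -> CP P g ->
  discont h `<=` discont f `|` discont g -> CP P h.
Proof.
case: hP => _ Pc PU PS; rewrite /CP => Cf Cg sub.
rewrite /=; apply: (PS _ _ (PU _ _ Cf Cg)); first exact: closed_closure.
rewrite -closureU; exact: closureS.
Qed.
Lemma CP_cst (c : R) : CP P (fun _ => c).
Proof.
case: hP => -[A PA] Pc PU PS; rewrite /CP.
rewrite /CP /=; apply: (PS A) => //; first exact: closed_closure.
have E : discont (fun _ : X => c) `<=` set0.
  move=> x; rewrite /discont /= => H; apply: H; exact: cvg_cst.
move=> x /(closureS E); rewrite closure0 //.
Qed.
Lemma CPM (f g : X -> R) : CP P f -> CP P g -> CP P (fun x => f x * g x).
Proof.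
move=> Cf Cg; apply: (@CP_of _ f g Cf Cg) => x /= nc.
have [cf|?] := pselect ({for x, continuous f}); last by left.
have [cg|?] := pselect ({for x, continuous g}); last by right.
exfalso; apply: nc; exact: (cvgM cf cg).
Qed.
Lemma CPD (f g : X -> R) : CP P f -> CP P g -> CP P (fun x => f x + g x).
Proof.
move=> Cf Cg; apply: (@CP_of _ f g Cf Cg) => x /= nc.
have [cf|?] := pselect ({for x, continuous f}); last by left.
have [cg|?] := pselect ({for x, continuous g}); last by right.
exfalso; apply: nc; exact: (cvgD cf cg).
Qed.
Lemma CPV (f : X -> R) : CP P f -> (forall x, f x != 0) -> CP P (fun x => (f x)^-1).
Proof.
move=> Cf nz; apply: (@CP_of _ f f Cf Cf) => x /= nc.
have [cf|?] := pselect ({for x, continuous f}); last by left.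
exfalso; apply: nc; exact: (cvgV (nz x) cf).
Qed.
Lemma N0 (I : set (X -> R)) a h :
  sum_mul_ideal I a 0 h <-> h = (fun _ => 0).
Proof.
split.
  by case=> m _ ->; apply/funext => x; rewrite big_ord0.
move=> ->; exists (fun _ _ => 0); first by [].
by apply/funext => x; rewrite big_ord0.
Qed.

Lemma sum_sub (I : set (X -> R)) a n : is_ideal P I ->
  (forall j, (j < n)%N -> CP P (a j)) -> sum_mul_ideal I a n `<=` I.
Proof.
case=> IC I0 ID IM Ca h [m Im ->].
have: forall k, (k <= n)%N -> I (fun x => \sum_(j < k) a j x * m j x).
  elim=> [|k IH] kn.
    by rewrite (_ : (fun _ => _) = fun _ => 0) //; apply/funext=> x; rewrite big_ord0.
  rewrite (_ : (fun _ => _) = fun x => (\sum_(j < k) a j x * m j x) + a k x * m k x).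
    apply: ID; first exact: IH (ltnW kn).
    by apply: IM; [apply: Ca | apply: Im].
  by apply/funext=> x; rewrite big_ord_recr.
by apply.
Qed.

Lemma L (I : set (X -> R)) a n : is_ideal P I -> regular_seq P I a n -> (0 < n)%N ->
  (forall m, I m -> exists2 m', I m' & m = fun x => a 0%N x * m' x) -> False.
Proof.
move=> II [Ca _ ne] n0 H; apply: ne; apply/seteqP; split; first exact: sum_sub.
move=> m /H [m' Im' ->].
have I0 : I (fun _ => 0) by case: II.
exists (fun j => if j == 0%N then m' else fun _ => 0).
  by move=> j _; case: ifP.
case: n n0 {Ca} => // n _; apply/funext => x; rewrite big_ord_recl /= big1 ?addr0 // => i _; by rewrite mulr0.
Qed.
End H.

Lemma ideal_CP (X : topologicalType) (R : realType) (P : set (set X)) :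
  closed_ideal P -> is_ideal (R:=R) P (CP P).
Proof.
move=> hP; split => //; first exact: CP_cst.
- by move=> f g; apply: CPD.
- by move=> a f; apply: CPM.
Qed.

Lemma ideal_princ (X : topologicalType) (R : realType) (P : set (set X)) (g : X -> R) :
  closed_ideal P -> CP P g ->
  is_ideal P [set h | exists2 r, CP P r & h = fun x => g x * r x].
Proof.
move=> hP Cg; split.
- by move=> h [r Cr ->]; apply: CPM.
- by exists (fun _ => 0); [apply: CP_cst | apply/funext=> x; rewrite mulr0].
- move=> f h [r Cr ->] [s Cs ->]; exists (fun x => r x + s x); first exact: CPD.
  by apply/funext=> x; rewrite mulrDr.
- move=> a f Ca [r Cr ->]; exists (fun x => a x * r x); first exact: CPM.
  by apply/funext=> x; rewrite mulrCA.
Qed.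

Lemma funeq0 {X : Type} {R : realType} (f : X -> R) : f <> (fun _ => 0) -> exists x, f x != 0.
Proof.
move=> nf; apply: contrapT => nx; apply: nf; apply/funext => x.
by apply/eqP; apply: contrapT => h; apply: nx; exists x; apply/negP.
Qed.

Theorem theorem4p5 (X : topologicalType) (R : realType) (P : set (set X)) :
  accessible_space X -> closed_ideal P ->
  ((forall I : set (X -> R), is_ideal P I -> depth_zero P I) <-> PP_space R P) /\
  ((forall I : set (X -> R), essential_ideal P I -> depth_zero P I)
     <-> almost_PP_space R P).
Proof.
move=> _ hP; split; split.
- move=> D f Cf.
  pose I := [set h | exists2 r, CP P r & h = fun x => f x * r x].
  have II : is_ideal P I by exact: ideal_princ.
  have E : sum_mul_ideal I (fun _ => f) 1 = I.
    apply: contrapT => ne; apply: (D I II); exists (fun _ => f), 1%N; split => //.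
    split => // k; rewrite ltnS leqn0 => /eqP -> m [r Cr ->] /N0 nm /N0 fm.
    apply: nm; apply/funext => x; have := congr1 (fun h => h x) fm => /= /eqP.
    rewrite mulf_eq0 => /orP [/eqP fx|/eqP //]; by rewrite fx mul0r.
  have : I f by exists (fun _ => 1); [exact: CP_cst | apply/funext=> x; rewrite mulr1].
  rewrite -E => -[m Im Ef].
  have [r Cr Er] := Im 0%N isT.
  exists r => //; apply/funext => x.
  have := congr1 (fun h => h x) Ef; rewrite /= big_ord1 Er /= => Ex.
  by rewrite [LHS]Ex; ring.
- move=> PP I II [a [n [n0 rs]]].
  have [Ca Reg _] := rs.
  have [b Cb Eb] := PP _ (Ca 0%N n0).
  case: (II) => IC I0 ID IM.
  apply: (L II rs n0) => m Im.
  exists (fun x => b x * m x); first exact: IM.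
  pose d := fun x => m x + ((-1) * (a 0%N x * b x)) * m x.
  have Id : I d.
    apply: ID => //; apply: IM => //.
    apply: (@CPM _ _ _ hP (fun _ => -1)) => //; first exact: CP_cst.
    exact: (@CPM _ _ _ hP _ _ (Ca 0%N n0) Cb).
  have ad : (fun x => a 0%N x * d x) = (fun _ => 0).
    apply/funext => x; have := congr1 (fun h => h x) Eb => /= Ex.
    have aa : a 0%N x * (a 0%N x * b x) = a 0%N x by rewrite [RHS]Ex; ring.
    rewrite /d; transitivity (a 0%N x * m x - a 0%N x * (a 0%N x * b x) * m x); first ring.
    by rewrite aa subrr.
  have d0 : d = (fun _ => 0).
    apply/(N0 _ _ I a _); apply: contrapT => nd; apply: (Reg 0%N n0 d Id nd); apply/(N0 _ _ I a _); exact: ad.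
  apply/funext => x; have := congr1 (fun h => h x) d0; rewrite /d /= => /eqP.
  by rewrite mulN1r mulNr subr_eq0 => /eqP E; rewrite [LHS]E mulrA.
- move=> D f Cf [x0 zx0].
  apply: contrapT => nI.
  have II := ideal_CP R hP.
  have EI : essential_ideal P (CP (R:=R) P).
    split => // J [JC _ _ _] [g Jg g0]; exists g => //; split => //; exact: JC.
  apply: (D _ EI); exists (fun _ => f), 1%N; split => //; split => //.
  - move=> k; rewrite ltnS leqn0 => /eqP -> m Cm /N0 nm /N0 fm.
    have [y my] := funeq0 (R:=R) nm.
    apply: nI; exists y, m; split => //; split => // z mz.
    have := congr1 (fun h => h z) fm => /= /eqP; rewrite mulf_eq0 => /orP [/eqP //|mz0].
    by rewrite /coz /= mz0 in mz.
  - move=> E.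
    have : CP (R:=R) P (fun _ => 1) by exact: CP_cst.
    rewrite -E => -[m _ Em].
    have := congr1 (fun h => h x0) Em; rewrite /= big_ord1.
    rewrite /zeroset /= in zx0; rewrite zx0 mul0r => /eqP; by rewrite oner_eq0.
- move=> AP I [II ess] [a [n [n0 rs]]].
  have [Ca Reg _] := rs.
  case: (II) => IC I0 ID IM.
  have nz : forall x, a 0%N x != 0.
    move=> x; apply/negP => /eqP ax.
    have [y [g [Cg [gy gZ]]]] := AP _ (Ca 0%N n0) (ex_intro _ x ax).
    have Jg : nonzero_set [set h | exists2 r, CP P r & h = fun x => g x * r x].
      exists g; first by exists (fun _ => 1); [exact: CP_cst | apply/funext=> z; rewrite mulr1].
      move=> g0; move: gy; rewrite /coz /= g0 eqxx //.
    have [h [Ih [r Cr Eh]] h0] := ess _ (@ideal_princ _ _ _ g hP Cg) Jg.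
    apply: (Reg 0%N n0 h Ih); first by move/N0.
    apply/N0; apply/funext => z; rewrite Eh.
    have [gz|gz] := eqVneq (g z) 0; first by rewrite gz mul0r mulr0.
    by rewrite (gZ z gz) mul0r.
  apply: (L II rs n0) => m Im.
  exists (fun x => (a 0%N x)^-1 * m x).
    apply: IM => //; exact: (@CPV _ _ _ hP _ (Ca 0%N n0) nz).
  by apply/funext => x; rewrite mulrA mulfV // mul1r.
Qed.
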